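(* Let $K\subset\mathbb{R}^d$ be nonempty, closed, convex with $\mathrm{B}_d(0)\subseteq K\subseteq R\,\mathrm{B}_d(0)$, let $f$ be convex and $L$-Lipschitz on $K$, let $a,\eta>0$, $(y,s)\in\mathbb{R}^d\times\mathbb{R}$, $Q=\{(x,t):x\in K,f(x)\le at\}$, $z=(y,s-a\eta)$, $\Theta(x,t)=I_Q(x,t)+\frac1{2\eta}\|(x,t)-z\|^2-\frac{a^2\eta}2+as$, and $\zeta(x)=\frac1{2\eta}\|x-y\|^2+\frac1{2\eta}\big[\frac{f(x)}a-(s-a\eta)\big]_+^2$ for $x\in K$. Then: (a) the minimizer of $\Theta$ over $\mathbb{R}^{d+1}$ is $(x_*,t_* )$ with $x_*=\arg\min_{x\in K}\zeta(x)$ and $t_*=\max\{f(x_* )/a,\ s-a\eta\}$; (b) $\zeta$ is $\eta^{-1}$-strongly convex; (c) if $\tilde x\in K$ satisfies $\zeta(\tilde x)-\min_K\zeta\le\frac1{d+1}$ and $\tilde t=\max\{f(\tilde x)/a,s-a\eta\}$, then $\tilde w=(\tilde x,\tilde t)$ satisfies $\|\tilde w-\mathrm{proj}_Q(z)\|\le(1+\frac La)\sqrt{\frac{2\eta}{d+1}}$.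
   Context: $[u]_+=\max\{u,0\}$; $I_Q$ is $0$ on $Q$ and $+\infty$ off $Q$; $\mathrm{proj}_Q(z)=\arg\min_{w\in Q}\|w-z\|$ (which is the minimizer of $\Theta$). *)

(* Defs.v *)
From HB Require Import structures.
From mathcomp Require Import all_boot all_order all_algebra.
From mathcomp Require Import all_classical all_reals all_analysis.
Set Implicit Arguments. Unset Strict Implicit. Unset Printing Implicit Defensive.
Import Order.TTheory GRing.Theory Num.Theory.
Import numFieldNormedType.Exports.
Local Open Scope classical_set_scope.
Local Open Scope ring_scope.

Section Defs.
Variables (R : realType) (d : nat).
Notation V := 'rV[R]_d.

Definition sqnormV (x : V) : R := \sum_(i < d) (x ord0 i) ^+ 2.
Definition enormV (x : V) : R := Num.sqrt (sqnormV x).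

(* Euclidean norm on R^{d+1} = R^d x R *)
Definition sqnorm1 (w : V * R) : R := sqnormV w.1 + w.2 ^+ 2.
Definition enorm1 (w : V * R) : R := Num.sqrt (sqnorm1 w).
Definition sub1 (w w' : V * R) : V * R := (w.1 - w'.1, w.2 - w'.2).

Definition cvx_set (K : set V) : Prop :=
  forall x y l, K x -> K y -> 0 <= l <= 1 -> K (l *: x + (1 - l) *: y).

Definition cvx_fun_on (K : set V) (f : V -> R) : Prop :=
  forall x y l, K x -> K y -> 0 <= l <= 1 ->
    f (l *: x + (1 - l) *: y) <= l * f x + (1 - l) * f y.

Definition lipschitz_with_on (K : set V) (L : R) (f : V -> R) : Prop :=
  forall x y, K x -> K y -> `|f x - f y| <= L * enormV (x - y).

Definition strongly_cvx_on (K : set V) (mu : R) (g : V -> R) : Prop :=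
  forall x y l, K x -> K y -> 0 <= l <= 1 ->
    g (l *: x + (1 - l) *: y) <=
      l * g x + (1 - l) * g y - mu / 2 * (l * (1 - l)) * (sqnormV (x - y)).

Definition is_argmin_on (K : set V) (g : V -> R) (x : V) : Prop :=
  K x /\ forall y, K y -> g x <= g y.

Definition pospart (u : R) : R := Num.max u 0.

Definition Qset_epi (K : set V) (f : V -> R) (a : R) : set (V * R) :=
  [set w | K w.1 /\ f w.1 <= a * w.2].

Definition Theta_fun (K : set V) (f : V -> R) (a eta : R) (y : V) (s : R)
  (w : V * R) : \bar R :=
  if `[< Qset_epi K f a w >] then
    ((1 / (2 * eta)) * sqnorm1 (sub1 w (y, s - a * eta))
       - a ^+ 2 * eta / 2 + a * s)%:E
  else +oo%E.

Definition is_global_minimizer (F : V * R -> \bar R) (w : V * R) : Prop :=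
  forall w', (F w <= F w')%E.

Definition zeta_fun (f : V -> R) (a eta : R) (y : V) (s : R) (x : V) : R :=
  (1 / (2 * eta)) * sqnormV (x - y)
  + (1 / (2 * eta)) * (pospart (f x / a - (s - a * eta))) ^+ 2.

Definition is_proj_onto (Q : set (V * R)) (z : V * R) (p : V * R) : Prop :=
  Q p /\ forall w, Q w -> enorm1 (sub1 p z) <= enorm1 (sub1 w z).

End Defs.

(* Main.v *)
Require Import Defs.
From HB Require Import structures.
From mathcomp Require Import all_boot all_order all_algebra.
From mathcomp Require Import all_classical all_reals all_analysis.
From mathcomp Require Import ring lra.
Import Order.TTheory GRing.Theory Num.Theory.
Import numFieldNormedType.Exports.
Local Open Scope classical_set_scope.
Local Open Scope ring_scope.

Section H.
Variables (R : realType) (d : nat).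
Notation V := 'rV[R]_d.

Lemma sqnormV_ge0 (v : V) : 0 <= sqnormV v.
Proof. by apply: sumr_ge0 => i _; exact: sqr_ge0. Qed.

Lemma sqnormV_eq0 (v : V) : sqnormV v = 0 -> v = 0.
Proof.
move=> /eqP; rewrite /sqnormV psumr_eq0 => [/allP H|i _]; last exact: sqr_ge0.
apply/matrixP => i j; rewrite mxE (ord1 i).
have := H j (mem_index_enum _); rewrite /= sqrf_eq0 => /eqP ->//.
Qed.

Lemma sqnormV_cvx (u v w : V) (l : R) :
  l * sqnormV (u - w) + (1 - l) * sqnormV (v - w)
  = sqnormV (l *: u + (1 - l) *: v - w) + l * (1 - l) * sqnormV (u - v).
Proof.
rewrite /sqnormV !mulr_sumr -!big_split /=; apply: eq_bigr => i _.
rewrite !mxE; ring.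
Qed.

Lemma coord_le_norm (v : V) i : `|v ord0 i| <= `|v|.
Proof.
change (`|v ord0 i| <= mx_norm v); rewrite mx_normrE.
by apply/bigmax_geP; right; exists (ord0, i).
Qed.

Lemma norm_le_enorm (v : V) : `|v| <= enormV v.
Proof.
change (mx_norm v <= enormV v); rewrite mx_normrE.
apply: bigmax_le => [|[i j] _]; first exact: sqrtr_ge0.
rewrite (ord1 i) /= /enormV -(sqrtr_sqr (v ord0 j)) ler_wsqrtr //.
rewrite /sqnormV (bigD1 j) //= lerDl; apply: sumr_ge0 => k _; exact: sqr_ge0.
Qed.

Lemma enorm_le_norm (v : V) : enormV v <= Num.sqrt d%:R * `|v|.
Proof.
rewrite /enormV -(ger0_norm (normr_ge0 v)) -sqrtr_sqr -sqrtrM ?ler0n //.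
apply: ler_wsqrtr; rewrite /sqnormV.
apply: le_trans (_ : \sum_(i < d) `|v|^+2 <= _).
  apply: ler_sum => i _; rewrite -real_normK ?num_real //.
  by rewrite lerXn2r ?nnegrE ?normr_ge0 ?coord_le_norm.
by rewrite sumr_const card_ord mulr_natl.
Qed.

Lemma near_norm (x : V) (e : R) : 0 < e -> \forall t \near x, `|x - t| < e.
Proof. move=> e0; have /fcvgrPdist_lt H : (nbhs x --> x)%classic by []. exact: H. Qed.

Lemma lip_within_cont (K : set V) (L : R) (f : V -> R) :
  0 <= L -> lipschitz_with_on K L f -> {within K, continuous f}.
Proof.
move=> L0 Lf; apply/subspace_continuousP => x Kx.
apply/cvgrPdist_le => e e0.
set C := Num.sqrt d%:R * L + 1.
have C0 : 0 < C by rewrite /C ltr_wpDl // mulr_ge0 // sqrtr_ge0.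
rewrite near_withinE; near=> t => Kt.
apply: le_trans (Lf _ _ Kx Kt) _.
apply: le_trans (_ : L * (Num.sqrt d%:R * `|x - t|) <= _).
  by apply: ler_wpM2l => //; exact: enorm_le_norm.
have : `|x - t| < e / C by near: t; apply: near_norm; rewrite divr_gt0.
rewrite ltr_pdivlMr // => H.
apply: le_trans (ltW H); rewrite mulrA [L * _]mulrC /C mulrDr mulr1.
by rewrite [leLHS]mulrC lerDl normr_ge0.
Unshelve. all: by end_near.
Qed.
Lemma sum_cont (T : topologicalType) (I : Type) (r : seq I) (F : I -> T -> R) :
  (forall i, continuous (F i)) -> continuous (fun x => \sum_(i <- r) F i x).
Proof.
move=> Fc; elim: r => [|i r IH].
  rewrite (_ : (fun x => _) = fun=> 0); first exact: cst_continuous.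
  by apply/funext => x; rewrite big_nil.
rewrite (_ : (fun x => _) = F i + (fun x => \sum_(j <- r) F j x)).
  by move=> x; apply: continuousD; [exact: Fc| exact: IH].
by apply/funext => x; rewrite big_cons.
Qed.

Lemma sqr_cont (T : topologicalType) (g : T -> R) :
  continuous g -> continuous (fun x => g x ^+ 2).
Proof.
move=> gc; rewrite (_ : (fun x => _) = g \* g); last by apply/funext => x; rewrite expr2.
by move=> x; apply: continuousM; exact: gc.
Qed.

Lemma sqnormV_cont (y : V) : continuous (fun x : V => sqnormV (x - y)).
Proof.
apply: sum_cont => i; apply: sqr_cont.
rewrite (_ : (fun x => _) = (fun x : V => x ord0 i) - cst (y ord0 i)).
  by move=> x; apply: continuousB; [exact: coord_continuous | exact: cst_continuous].
by apply/funext => x; rewrite !mxE.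
Qed.

Lemma G_cont (c a c0 : R) : continuous (fun u : R => c * (pospart (u / a - c0)) ^+ 2).
Proof.
have P : continuous (fun u : R => pospart (u / a - c0)).
  move=> u; rewrite /pospart.
  rewrite (_ : (fun u => _) = (fun u => u / a - c0) \max cst 0) //.
  apply: continuous_max; last exact: cst_continuous.
  rewrite (_ : (fun u => _) = (fun u => u * a^-1) - cst c0) //.
  apply: continuousB; last exact: cst_continuous.
  rewrite (_ : (fun u => _) = id \* cst a^-1) //.
  by apply: continuousM; [exact: cvg_id | exact: cst_continuous].
have Q := sqr_cont _ _ P.
rewrite (_ : (fun u => _) = cst c \* (fun u => (pospart (u / a - c0)) ^+ 2)) //.
by move=> u; apply: continuousM; [exact: cst_continuous | exact: Q].
Qed.
Lemma ze_within_cont (K : set V) (L : R) (f : V -> R) a eta y s :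
  0 <= L -> lipschitz_with_on K L f ->
  {within K, continuous (zeta_fun f a eta y s)}.
Proof.
move=> L0 Lf.
have hc : {within K, continuous (fun x : V => sqnormV (x - y))} := continuous_subspaceT (sqnormV_cont y).
have fc := lip_within_cont _ _ _ L0 Lf.
set c := 1 / (2 * eta).
rewrite (_ : zeta_fun f a eta y s = (fun x => c * sqnormV (x - y))
   + ((fun u => c * (pospart (u / a - (s - a * eta))) ^+ 2) \o f)) //.
move=> x; apply: continuousD.
  by apply: continuousM; [exact: cst_continuous | exact: hc].
by apply: continuous_comp; [exact: fc | exact: G_cont].
Qed.

Lemma exists_min (K : set V) (Rad L : R) (f : V -> R) a eta y s :
  K !=set0 -> closed K -> (forall x, K x -> enormV x <= Rad) ->
  0 <= L -> lipschitz_with_on K L f ->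
  exists xs, is_argmin_on K (zeta_fun f a eta y s) xs.
Proof.
move=> K0 Kcl Kb L0 Lf.
have Kbd : [bounded x | x in K].
  rewrite /bounded_near; near=> M => x Kx /=.
  apply: le_trans (norm_le_enorm x) _; apply: le_trans (Kb _ Kx) _.
  near: M; apply: nbhs_pinfty_ge; exact: num_real.
have [c cK cmin] := EVT_min_rV K0 (bounded_closed_compact Kbd Kcl) (ze_within_cont _ _ _ a eta y s L0 Lf).
exists c; split; first by rewrite inE in cK.
by move=> t Kt; apply: cmin; rewrite inE.
Unshelve. all: by end_near.
Qed.
Lemma pos_eq0 (u : R) : u <= 0 -> pospart u = 0.
Proof. by move=> h; rewrite /pospart max_r. Qed.
Lemma pos_eq (u : R) : 0 <= u -> pospart u = u.
Proof. by move=> h; rewrite /pospart max_l. Qed.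
Lemma pos_ge0 (u : R) : 0 <= pospart u.
Proof. by case: (leP u 0) => h; [rewrite pos_eq0 | rewrite pos_eq // ltW]. Qed.
Lemma pos_ge (u : R) : u <= pospart u.
Proof. by case: (leP u 0) => h; [rewrite pos_eq0 | rewrite pos_eq // ltW]. Qed.

Lemma pos_sq_le (c0 u t : R) : u <= t -> pospart (u - c0) ^+ 2 <= (t - c0) ^+ 2.
Proof.
move=> ut; case: (leP (u - c0) 0) => h.
  by rewrite pos_eq0 // expr0n /= sqr_ge0.
rewrite (pos_eq _ (ltW h)) -subr_ge0.
have -> : (t - c0) ^+ 2 - (u - c0) ^+ 2 = (t - u) * (t + u - 2 * c0) by ring.
apply: mulr_ge0; lra.
Qed.

Lemma pos_sq_eq (c0 u t : R) : u <= t -> (t - c0) ^+ 2 <= pospart (u - c0) ^+ 2 ->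
  t = Num.max u c0.
Proof.
move=> ut; case: (leP (u - c0) 0) => h.
  rewrite pos_eq0 // expr0n /= => h2.
  have : (t - c0) ^+ 2 = 0 by apply/le_anti; rewrite h2 sqr_ge0.
  move/eqP; rewrite sqrf_eq0 subr_eq0 => /eqP ->.
  by rewrite max_r // -subr_le0.
rewrite (pos_eq _ (ltW h)) => h2.
have : t <= u.
  rewrite leNgt; apply/negP => tu.
  have hp : 0 < (t - u) * (t + u - 2 * c0) by apply: mulr_gt0; lra.
  nra.
move=> tu; have -> : t = u by apply/le_anti; rewrite tu ut.
by rewrite max_l // -subr_ge0 ltW.
Qed.

Lemma max_sq_eq (c0 u : R) : (Num.max u c0 - c0) ^+ 2 = pospart (u - c0) ^+ 2.
Proof.
case: (leP (u - c0) 0) => h.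
  by rewrite pos_eq0 // max_r ?subrr // -subr_le0.
by rewrite (pos_eq _ (ltW h)) max_l // -subr_ge0 ltW.
Qed.

Lemma max_lip (c0 u v : R) : `|Num.max u c0 - Num.max v c0| <= `|u - v|.
Proof.
have h1 := ler_norm (u - v); have h2 := ler_norm (v - u).
rewrite distrC in h2.
rewrite ler_norml; case: (leP u c0) => hu; case: (leP v c0) => hv.
all: have n0 := normr_ge0 (u - v); apply/andP; split; lra.
Qed.

Lemma pos_cvx (um u1 u2 l : R) : 0 <= l <= 1 -> um <= l * u1 + (1 - l) * u2 ->
  pospart um ^+ 2 <= l * pospart u1 ^+ 2 + (1 - l) * pospart u2 ^+ 2.
Proof.
move=> /andP[l0 l1] hm.
have p1 := pos_ge0 u1; have p2 := pos_ge0 u2.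
have q1 := pos_ge u1; have q2 := pos_ge u2.
have hq : 0 <= l * pospart u1 ^+ 2 + (1 - l) * pospart u2 ^+ 2.
  by apply: addr_ge0; apply: mulr_ge0 => //; [exact: sqr_ge0 | lra | exact: sqr_ge0].
case: (leP um 0) => h; first by rewrite pos_eq0 // expr0n.
rewrite (pos_eq _ (ltW h)).
have hb : um <= l * pospart u1 + (1 - l) * pospart u2 by nra.
have hc : l * pospart u1 ^+ 2 + (1 - l) * pospart u2 ^+ 2 - (l * pospart u1 + (1 - l) * pospart u2) ^+ 2
   = l * (1 - l) * (pospart u1 - pospart u2) ^+ 2 by ring.
have hd : 0 <= l * (1 - l) * (pospart u1 - pospart u2) ^+ 2.
  by apply: mulr_ge0; [apply: mulr_ge0; lra | exact: sqr_ge0].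
nra.
Qed.

Lemma sqrt_add_le (A B : R) : 0 <= A -> Num.sqrt (A + B ^+ 2) <= Num.sqrt A + `|B|.
Proof.
move=> A0.
have s0 := sqrtr_ge0 A; have b0 := normr_ge0 B.
rewrite -(ger0_norm (addr_ge0 s0 b0)) -sqrtr_sqr ler_wsqrtr //.
have hA := sqr_sqrtr A0; have hB : `|B| ^+ 2 = B ^+ 2 by rewrite real_normK ?num_real.
nra.
Qed.

Lemma growth (K : set V) (mu : R) (g : V -> R) (xs x : V) :
  cvx_set K -> strongly_cvx_on K mu g -> 0 <= mu -> is_argmin_on K g xs -> K x ->
  mu / 2 * sqnormV (x - xs) <= g x - g xs.
Proof.
move=> Kc sc mu0 [Kxs xmin] Kx.
set A := g x - g xs; set B := mu / 2 * sqnormV (x - xs).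
have A0 : 0 <= A by rewrite subr_ge0 xmin.
have B0 : 0 <= B by apply: mulr_ge0; [apply: divr_ge0 | exact: sqnormV_ge0].
rewrite leNgt; apply/negP => AB.
have Bp : 0 < B by lra.
set l := (B - A) / (2 * B).
have hl : l * (2 * B) = B - A by rewrite /l mulfVK //; lra.
have B2 : 0 < 2 * B by lra.
have l0 : 0 < l by rewrite /l divr_gt0 //; lra.
have l1 : l <= 1 by rewrite /l ler_pdivrMr //; lra.
have hl01 : 0 <= l <= 1 by rewrite l1 ltW.
have H1 := sc x xs l Kx Kxs hl01.
have H2 := xmin _ (Kc x xs l Kx Kxs hl01).
have H3 : l * A >= l * (B * (1 - l)).
  rewrite /A /B; rewrite /B in H1; nra.
rewrite ler_pM2l // in H3.
nra.
Qed.
Lemma ze_scvx (K : set V) (f : V -> R) a eta y s :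
  cvx_fun_on K f -> 0 < a -> 0 < eta ->
  strongly_cvx_on K eta^-1 (zeta_fun f a eta y s).
Proof.
move=> fc a0 e0 x1 x2 l K1 K2 hl.
have hl' := hl; move/andP: hl' => [l0 l1].
set c0 := s - a * eta.
have hm : f (l *: x1 + (1 - l) *: x2) / a - c0 <=
   l * (f x1 / a - c0) + (1 - l) * (f x2 / a - c0).
  have := fc x1 x2 l K1 K2 hl.
  have ai : 0 < a^-1 by rewrite invr_gt0.
  rewrite -(ler_pM2r ai) => h.
  apply: le_trans (lerB h (lexx c0)) _.
  by rewrite le_eqVlt; apply/orP; left; apply/eqP; ring.
have P := pos_cvx _ _ _ _ hl hm.
have E := sqnormV_cvx x1 x2 y l.
rewrite /zeta_fun -/c0.
have ce : eta^-1 / 2 = 1 / (2 * eta) by field; lra.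
rewrite ce.
set c := 1 / (2 * eta).
have c0' : 0 < c by rewrite /c divr_gt0 // mulr_gt0.
set h1 := sqnormV (x1 - y); set h2 := sqnormV (x2 - y).
set hm' := sqnormV (l *: x1 + (1 - l) *: x2 - y).
set D := sqnormV (x1 - x2).
set pm := pospart (f (l *: x1 + (1 - l) *: x2) / a - c0) ^+ 2.
set p1 := pospart (f x1 / a - c0) ^+ 2.
set p2 := pospart (f x2 / a - c0) ^+ 2.
have : c * pm <= c * (l * p1 + (1 - l) * p2) by rewrite ler_pM2l.
rewrite -/h1 -/h2 -/hm' -/D in E.
nra.
Qed.
End H.

Theorem lemma18 (R : realType) (d : nat) (K : set 'rV[R]_d) (Rad : R)
  (f : 'rV[R]_d -> R) (L a eta : R) (y : 'rV[R]_d) (s : R) :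
  K !=set0 -> topology_structure.closed K -> cvx_set K ->
  (forall x, enormV x <= 1 -> K x) ->
  (forall x, K x -> enormV x <= Rad) ->
  cvx_fun_on K f -> 0 <= L -> lipschitz_with_on K L f ->
  0 < a -> 0 < eta ->
  let z := (y, s - a * eta) in
  let Q := Qset_epi K f a in
  let Th := Theta_fun K f a eta y s in
  let ze := zeta_fun f a eta y s in
  (* (a) *)
  (exists xs : 'rV[R]_d,
     is_argmin_on K ze xs /\ (forall x', is_argmin_on K ze x' -> x' = xs) /\
     let ts := Num.max (f xs / a) (s - a * eta) in
     (forall w, is_global_minimizer Th w <-> w = (xs, ts)) /\
     is_proj_onto Q z (xs, ts)) /\
  (* (b) *)
  strongly_cvx_on K eta^-1 ze /\
  (* (c) *)
  (forall xt : 'rV[R]_d, K xt ->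
     (forall x, K x -> ze xt - ze x <= 1 / (d.+1)%:R) ->
     let tt := Num.max (f xt / a) (s - a * eta) in
     forall p, is_proj_onto Q z p ->
       enorm1 (sub1 (xt, tt) p) <= (1 + L / a) * Num.sqrt (2 * eta / (d.+1)%:R)).
Proof.
move=> K0 Kcl Kcvx _ Kb fcvx L0 Lf a0 eta0 z Q Th ze.
have [xs [Kxs xsmin]] := @exists_min R d K Rad L f a eta y s K0 Kcl Kb L0 Lf.
have sc : strongly_cvx_on K eta^-1 ze by exact: ze_scvx.
set c := 1 / (2 * eta).
have cp : 0 < c by rewrite /c divr_gt0 // mulr_gt0.
have ce : eta^-1 / 2 = c by rewrite /c; field; lra.
have grow : forall x, K x -> c * sqnormV (x - xs) <= ze x - ze xs.
  move=> x Kx; rewrite -ce; apply: (@growth R d K) => //; first by rewrite invr_ge0 ltW.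
set c0 := s - a * eta.
set N := fun x => sqnormV (x - y) + pospart (f x / a - c0) ^+ 2.
have zeN : forall x, ze x = c * N x by move=> x; rewrite /ze /zeta_fun /N mulrDr.
have minN : forall x, K x -> N xs <= N x.
  by move=> x Kx; rewrite -(ler_pM2l cp) -!zeN; exact: xsmin.
set ts := Num.max (f xs / a) c0.
have sqE : forall w : 'rV[R]_d * R, sqnorm1 (sub1 w z) = sqnormV (w.1 - y) + (w.2 - c0) ^+ 2 by [].
have QN : forall w, Q w -> N w.1 <= sqnorm1 (sub1 w z).
  move=> [x t] [/= Kx ft]; rewrite sqE /N /= lerD2l; apply: pos_sq_le.
  by rewrite ler_pdivrMr // mulrC.
have Qxs : Q (xs, ts).
  split => //=; rewrite /ts -ler_pdivrMl //.
  by rewrite mulrC le_max lexx.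
have N0 : forall x, 0 <= N x.
  by move=> x; rewrite /N addr_ge0 // ?sqnormV_ge0 // sqr_ge0.
have Exs : sqnorm1 (sub1 (xs, ts) z) = N xs by rewrite sqE /N /= /ts max_sq_eq.
have eqxs : forall x, K x -> ze x <= ze xs -> x = xs.
  move=> x Kx hx; have g := grow x Kx.
  have : c * sqnormV (x - xs) <= 0 by lra.
  rewrite pmulr_rle0 // => h0.
  apply: subr0_eq; apply: sqnormV_eq0; apply/le_anti; rewrite h0 sqnormV_ge0.
  done.
have Key2 : forall w, Q w -> sqnorm1 (sub1 w z) <= N xs -> w = (xs, ts).
  move=> [x t] Qw h; have hN := QN _ Qw; have [/= Kx ft] := Qw.
  have ex : x = xs.
    by apply: eqxs => //; rewrite !zeN ler_pM2l //; apply: le_trans hN h.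
  subst x; rewrite sqE /N /= lerD2l in h.
  congr (_, _); apply: pos_sq_eq h.
  by rewrite ler_pdivrMr // mulrC.
have ThQ : forall w, Q w ->
    Th w = (c * sqnorm1 (sub1 w z) - a ^+ 2 * eta / 2 + a * s)%:E.
  by move=> w Qw; rewrite /Th /Theta_fun asboolT.
have ThnQ : forall w, ~ Q w -> Th w = +oo%E.
  by move=> w Qw; rewrite /Th /Theta_fun asboolF.
have minQ : forall w, Q w -> N xs <= sqnorm1 (sub1 w z).
  by move=> w Qw; apply: le_trans (minN _ Qw.1) (QN _ Qw).
split; last split; first last.
- move=> xt Kxt hxt tt p [Qp pmin].
  have pE : p = (xs, ts).
    apply: Key2 => //; have := pmin _ Qxs.
    by rewrite /enorm1 ler_sqrt ?Exs.
  subst p.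
  set D := sqnormV (xt - xs).
  have hD : c * D <= 1 / (d.+1)%:R by apply: le_trans (grow _ Kxt) (hxt _ Kxs).
  have n0 : 0 < (d.+1)%:R :> R by rewrite ltr0n.
  have hD' : D <= 2 * eta / (d.+1)%:R.
    have -> : D = 2 * eta * (c * D) by rewrite /c; field; lra.
    have -> : 2 * eta / (d.+1)%:R = 2 * eta * (1 / (d.+1)%:R) by rewrite mul1r.
    by rewrite ler_pM2l // mulr_gt0.
  have ht : `|tt - ts| <= L / a * Num.sqrt D.
    rewrite /tt /ts; have hm := @max_lip R c0 (f xt / a) (f xs / a). apply: le_trans hm _.
    rewrite -mulrBl normrM (gtr0_norm (_ : 0 < a^-1)) ?invr_gt0 //.
    have := Lf _ _ Kxt Kxs; rewrite -/D => hL.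
    rewrite -(ler_pM2r (_ : 0 < a^-1)) ?invr_gt0 // in hL.
    apply: le_trans hL _; rewrite /enormV -/D le_eqVlt; apply/orP; left; apply/eqP.
    ring.
  rewrite /enorm1.
  have -> : sqnorm1 (sub1 (xt, tt) (xs, ts)) = D + (tt - ts) ^+ 2 by [].
  have sa := @sqrt_add_le R D (tt - ts) (@sqnormV_ge0 R d _). apply: le_trans sa _.
  have sD : Num.sqrt D <= Num.sqrt (2 * eta / (d.+1)%:R) by apply: ler_wsqrtr.
  have La : 0 <= L / a by rewrite divr_ge0 // ltW.
  have s0 := sqrtr_ge0 D.
  nra.
- exact: sc.
- exists xs; split; first by split.
  split; first by move=> x' [Kx' x'min]; apply: eqxs => //; exact: x'min.
  change ((forall w, is_global_minimizer Th w <-> w = (xs, ts)) /\ is_proj_onto Q z (xs, ts)).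
  split.
    move=> w; split.
      move=> H; have H1 := H (xs, ts); rewrite (ThQ _ Qxs) in H1.
      have [Qw|nQw] := pselect (Q w); last by rewrite ThnQ // leye_eq in H1.
      rewrite ThQ // lee_fin !lerD2r ler_pM2l // Exs in H1.
      exact: Key2.
    move=> -> w'; rewrite ThQ //.
    have [Qw'|nQw'] := pselect (Q w'); last by rewrite ThnQ // leey.
    by rewrite ThQ // lee_fin !lerD2r ler_pM2l // Exs; apply: minQ.
  split => // w Qw; rewrite /enorm1 ler_wsqrtr // Exs; exact: minQ.
Qed.
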